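(* Let $G$ be a finite subgroup of $O(d)$ and $p\ge1$ an integer such that every $G$-invariant homogeneous polynomial of degree $2p$ on $\mathbb{R}^d$ is a scalar multiple of $|x|^{2p}$. Then there is a homogeneous symmetric polynomial $F_p$ of degree $p$ in $d$ variables such that for every real symmetric $d\times d$ matrix $M$ and every $y\in\mathbb{R}^d$, $$\frac{1}{|G|}\sum_{U\in G}\langle M,P_{Uy}\rangle_{HS}^p=F_p(\sigma(M))\,|P_y|_{HS}^p=F_p(\sigma(M))\,|y|^{2p},$$ where $\sigma(M)$ is the multiset of eigenvalues of $M$ (with multiplicity).
   Context: For $y\in\mathbb{R}^d$, $P_y=yy^\dagger$ ($\dagger$ = transpose). $\langle A,B\rangle_{HS}=\operatorname{tr}(A^\dagger B)$ is the Hilbert–Schmidt inner product and $|A|_{HS}=\langle A,A\rangle_{HS}^{1/2}$. *)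

(* Defs.v *)
From HB Require Import structures.
From mathcomp Require Import all_boot all_order all_algebra.
From mathcomp Require Import mpoly.
Set Implicit Arguments. Unset Strict Implicit. Unset Printing Implicit Defensive.
Import Order.TTheory GRing.Theory Num.Theory.
Local Open Scope ring_scope.

Definition finite_subgroup_O (R : rcfType) (d : nat) (G : seq 'M[R]_d) : Prop :=
  [/\ uniq G, 1%:M \in G,
      (forall U V, U \in G -> V \in G -> U *m V \in G),
      (forall U, U \in G -> invmx U \in G)
    & (forall U, U \in G -> U *m U^T = 1%:M)].

Definition peval (R : rcfType) (d : nat) (q : {mpoly R[d]}) (x : 'cV[R]_d) : R :=
  q.@[fun i => x i 0].

Definition sqnorm_poly (R : rcfType) (d : nat) : {mpoly R[d]} :=
  \sum_(i < d) 'X_i ^+ 2.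

Definition sqnorm (R : rcfType) (d : nat) (y : 'cV[R]_d) : R :=
  \sum_(i < d) y i 0 ^+ 2.

Definition Pproj (R : rcfType) (d : nat) (y : 'cV[R]_d) : 'M[R]_d := y *m y^T.

Definition hs_inner (R : rcfType) (d : nat) (A B : 'M[R]_d) : R := \tr (A^T *m B).
Definition hs_norm (R : rcfType) (d : nat) (A : 'M[R]_d) : R := Num.sqrt (hs_inner A A).

Definition eigen_multiset (R : rcfType) (d : nat) (M : 'M[R]_d) (s : 'I_d -> R) : Prop :=
  char_poly M = \prod_(i < d) ('X - (s i)%:P).

(* Main.v *)
From HB Require Import structures.
From mathcomp Require Import all_boot all_order all_algebra.
From mathcomp Require Import mpoly.
From mathcomp Require Import ring perm complex.
Require Import Defs.
Set Implicit Arguments. Unset Strict Implicit. Unset Printing Implicit Defensive.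
Import Order.TTheory GRing.Theory Num.Theory.
Local Open Scope ring_scope.


Section Comb.
Variable K : comNzRingType.
Implicit Types (T : nat -> K) (L : seq nat).

Fixpoint pr (a : nat) L : seq (K * seq nat) :=
  if L is b :: L' then (4%:R, (a + b)%N :: L') :: [seq (c.1, b :: c.2) | c <- pr a L']
  else [::].

Fixpoint Dl T L : seq (K * seq nat) :=
  if L is a :: L' then
    [seq (c.1, a :: c.2) | c <- Dl T L'] ++ (T a *+ 2, L') :: [seq (c.1 *+ 2, c.2) | c <- pr a L']
  else [::].

Fixpoint Kf (n : nat) T L : K :=
  if n is n'.+1 then \sum_(c <- Dl T L) c.1 * Kf n' T c.2
  else (if L is [::] then 1 else 0).

Lemma pr_size a L c : c \in pr a L -> size c.2 = size L.
Proof.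
elim: L c => [|b L IH] c //=; rewrite in_cons => /orP[/eqP -> //|/mapP[c' /IH h ->]] /=.
by rewrite h.
Qed.

Lemma Dl_size T L c : c \in Dl T L -> (size c.2).+1 = size L.
Proof.
elim: L c => [|a L IH] c //=; rewrite mem_cat in_cons.
case/orP => [/mapP[c' /IH h ->]|/orP[/eqP -> //|/mapP[c' /pr_size h ->]]] /=.
  by rewrite h.
by rewrite h.
Qed.

Lemma pr_sum a L c : c \in pr a L -> sumn c.2 = (a + sumn L)%N /\ c.1 = 4%:R.
Proof.
elim: L c => [|b L IH] c //=; rewrite in_cons => /orP[/eqP -> //=|/mapP[c' /IH [h1 h2] ->]] /=.
  by rewrite addnA.
by rewrite h1 h2 addnCA.
Qed.

Lemma eq_Dl T T' L : T =1 T' -> Dl T L = Dl T' L.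
Proof. by move=> e; elim: L => //= a L ->; rewrite e. Qed.

Lemma eq_Kf n T T' L : T =1 T' -> Kf n T L = Kf n T' L.
Proof.
move=> e; elim: n L => //= n IH L; rewrite (eq_Dl L e).
by apply: eq_bigr => c _; rewrite IH.
Qed.

End Comb.

Lemma rmorph_Kf (K K' : comNzRingType) (f : {rmorphism K -> K'}) n T L :
  f (Kf n T L) = Kf n (f \o T) L.
Proof.
have prE a L' : [seq (f c.1, c.2) | c <- pr K a L'] = pr K' a L'.
  elim: L' => //= b L' IH; rewrite rmorph_nat; congr (_ :: _).
  by rewrite -IH -!map_comp.
have DlE L' : [seq (f c.1, c.2) | c <- Dl T L'] = Dl (f \o T) L'.
  elim: L' => //= a L' IH; rewrite map_cat /= -IH -prE -!map_comp rmorphMn.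
  congr (_ ++ _ :: _); apply: eq_map => c /=; by rewrite rmorphMn.
elim: n L => [|n IH] L /=; first by case: L => [|? ?]; rewrite ?rmorph1 ?rmorph0.
rewrite rmorph_sum -DlE big_map; apply: eq_bigr => c _ /=.
by rewrite rmorphM IH.
Qed.



Lemma Dl_pos (K : numDomainType) (T : nat -> K) L c :
  (forall a, 0 < T a) -> c \in Dl T L -> 0 < c.1.
Proof.
move=> Tp; elim: L c => [|a L IH] c //=; rewrite mem_cat in_cons.
case/orP => [/mapP[c' /IH h ->] //|/orP[/eqP -> /=|/mapP[c' h ->] /=]].
  by rewrite pmulrn_lgt0.
by have [_ ->] := pr_sum h; rewrite pmulrn_lgt0 // ltr0n.
Qed.

Lemma Kf_pos (K : numDomainType) (T : nat -> K) n L :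
  (forall a, 0 < T a) -> size L = n -> 0 < Kf n T L.
Proof.
move=> Tp; elim: n L => [|n IH] [|a L] //= [eL].
rewrite big_cat big_cons /=.
have ge0 (s : seq (K * seq nat)) : {subset s <= Dl T (a :: L)} ->
   0 <= \sum_(c <- s) c.1 * Kf n T c.2.
  move=> sub; rewrite big_seq; apply: sumr_ge0 => c /sub cin.
  rewrite ltW // mulr_gt0 ?(Dl_pos Tp cin) // IH //.
  by apply/eqP; rewrite -eqSS (Dl_size cin) /= eL.
have h1 := ge0 [seq (c.1, a :: c.2) | c <- Dl T L].
have h2 := ge0 [seq (c.1 *+ 2, c.2) | c <- pr K a L].
rewrite ltr_wpDl ?h1 // ?ltr_wpDr ?h2 //.
- by move=> c cin; rewrite mem_cat cin.
- by move=> c cin; rewrite /= mem_cat in_cons cin orbT orbT.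
- by rewrite mulr_gt0 ?pmulrn_lgt0 ?IH.
Qed.

Section MP.
Variables (R : comNzRingType) (d : nat).
Local Notation MP := {mpoly R[d]}.

Lemma Kf_sym n (T : nat -> MP) L :
  (forall a, T a \is symmetric) -> Kf n T L \is symmetric.
Proof.
move=> Ts; elim: n L => [|n IH] L /=; first by case: L => [|? ?]; rewrite ?rpred1 ?rpred0.
rewrite big_seq; apply: rpred_sum => c cin; apply: rpredM; last exact: IH.
elim: L c cin => [|a L IHL] c //=; rewrite mem_cat in_cons.
case/orP => [/mapP[c' /IHL h ->] //|/orP[/eqP -> /=|/mapP[c' h ->] /=]].
  by rewrite rpredMn.
by have [_ ->] := pr_sum h; rewrite rpredMn // rpred_nat.
Qed.

Lemma Dl_homog (T : nat -> MP) L c :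
  (forall k, T k \is k.-homog) -> c \in Dl T L ->
  (sumn c.2 <= sumn L)%N /\ c.1 \is (subn (sumn L) (sumn c.2)).-homog.
Proof.
move=> Th; elim: L c => [|a L IH] c //=; rewrite mem_cat in_cons.
case/orP => [/mapP[c' /IH [h1 h2] ->] /=|/orP[/eqP -> /=|/mapP[c' h ->] /=]].
- by rewrite leq_add2l h1 subnDl.
- by rewrite leq_addl addnK; split => //; apply: rpredMn.
have [e1 e2] := pr_sum h; rewrite e1 leqnn subnn; split => //.

by rewrite e2 !rpredMn // dhomog1.
Qed.

Lemma Kf_homog n (T : nat -> MP) L :
  (forall k, T k \is k.-homog) -> Kf n T L \is (sumn L).-homog.
Proof.
move=> Th; elim: n L => [|n IH] L /=.
  by case: L => [|? ?]; rewrite ?dhomog1 ?dhomog0.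
rewrite big_seq; apply: (big_ind (fun x : MP => x \is (sumn L).-homog)).
- exact: dhomog0.
- exact: dhomogD.
move=> c cin; have [h1 h2] := Dl_homog Th cin.
by rewrite -[sumn L](subnK h1); apply: dhomogM => //; exact: IH.
Qed.

End MP.

Section Lap.
Variables (R : comNzRingType) (d : nat).
Local Notation MP := {mpoly R[d]}.
Implicit Types (p q u v w : MP).

Lemma mderivXU (i j : 'I_d) : ('X_j : MP)^`M(i) = (j == i)%:R.
Proof.
rewrite mderivX mnm1E; case: (eqVneq j i) => [->|ne]; last by rewrite scale0r.
by rewrite -{1}[U_(i)%MM]add0m addmK mpolyX0 scale1r.
Qed.

Definition lap p : MP := \sum_(i < d) p^`M(i)^`M(i).
Definition gd p q : MP := \sum_(i < d) p^`M(i) * q^`M(i).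

Lemma lapD p q : lap (p + q) = lap p + lap q.
Proof. by rewrite /lap -big_split; apply: eq_bigr => i _; rewrite !mderivD. Qed.
Lemma lapZ c p : lap (c *: p) = c *: lap p.
Proof. by rewrite /lap scaler_sumr; apply: eq_bigr => i _; rewrite !mderivZ. Qed.
Lemma lap0 : lap 0 = 0.
Proof. by rewrite /lap big1 // => i _; rewrite !mderiv0. Qed.

Lemma lapM p q : lap (p * q) = p * lap q + q * lap p + gd p q *+ 2.
Proof.
rewrite /lap /gd mulr_sumr mulr_sumr -sumrMnl -!big_split /=.
apply: eq_bigr => i _; rewrite !mderivM !mderivD !mderivM.
by rewrite mulr2n; ring.
Qed.

Lemma gdM u v w : gd u (v * w) = gd u v * w + v * gd u w.
Proof.
rewrite /gd mulr_suml mulr_sumr -big_split /=; apply: eq_bigr => i _.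
by rewrite mderivM; ring.
Qed.

Lemma gdC u v : gd u v = gd v u.
Proof. by apply: eq_bigr => i _; rewrite mulrC. Qed.

Lemma gdDr u v w : gd u (v + w) = gd u v + gd u w.
Proof. by rewrite /gd -big_split; apply: eq_bigr => i _; rewrite mderivD mulrDr. Qed.

Definition qf (A : 'M[R]_d) : MP := \sum_i \sum_j A i j *: ('X_i * 'X_j).

Lemma qf_deriv A k : (qf A)^`M(k) = \sum_j (A k j + A j k) *: 'X_j.
Proof.
rewrite /qf raddf_sum /=.
have e i : (\sum_j A i j *: ('X_i * 'X_j))^`M(k) =
   (if i == k then \sum_j A k j *: 'X_j else 0) + A i k *: 'X_i.
  rewrite raddf_sum /=.
  under eq_bigr => j _ do rewrite mderivZ mderivM !mderivXU scalerDr.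
  rewrite big_split /=; congr (_ + _).
    case: (eqVneq i k) => [->|ne].
      by apply: eq_bigr => j _; rewrite mul1r.
    by rewrite big1 // => j _; rewrite mul0r scaler0.
  rewrite (bigD1 k) //= eqxx mulr1 big1 ?addr0 // => j /negbTE ->.
  by rewrite mulr0 scaler0.
rewrite (eq_bigr _ (fun i _ => e i)) big_split /= -big_mkcond /= big_pred1_eq.
by rewrite -big_split /=; apply: eq_bigr => j _; rewrite scalerDl.
Qed.


Lemma lap_qf A : lap (qf A) = (\tr A *+ 2) *: 1.
Proof.
rewrite /lap /mxtrace -sumrMnl scaler_suml; apply: eq_bigr => k _.
rewrite qf_deriv raddf_sum /=.
under eq_bigr => j _ do rewrite mderivZ mderivXU.
rewrite (bigD1 k) //= eqxx big1 ?addr0; first by rewrite mulr2n.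
by move=> j /negbTE ->; rewrite scaler0.
Qed.

Lemma gd_qf A B : A^T = A -> B^T = B -> gd (qf A) (qf B) = 4%:R *: qf (A *m B).
Proof.
move=> hA hB.
have eA i j : A i j = A j i by rewrite -{1}hA mxE.
have eB i j : B i j = B j i by rewrite -{1}hB mxE.
rewrite /gd /qf scaler_sumr.
under eq_bigr => k _ do rewrite !qf_deriv mulr_suml.
under [RHS]eq_bigr => j _ do rewrite scaler_sumr.
rewrite exchange_big /=; apply: eq_bigr => j _.
under eq_bigr => k _ do rewrite mulr_sumr.
rewrite exchange_big /=; apply: eq_bigr => l _.
rewrite !mxE scaler_suml scaler_sumr; apply: eq_bigr => k _.
rewrite -scalerAl -scalerAr scalerA -(eA j k) (eB l k) scalerA.
by congr (_ *: _); rewrite -!mulr2n; ring.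
Qed.

End Lap.

Section PL.
Variables (R : comNzRingType) (d : nat).
Local Notation MP := {mpoly R[d]}.
Variable M : 'M[R]_d.
Hypothesis hM : M^T = M.

Lemma trmxXs a : (M ^+ a)^T = M ^+ a.
Proof.
elim: a => [|a IH]; first by rewrite expr0 trmx1.
rewrite exprS -[M * _]/(M *m M ^+ a) trmx_mul IH hM.
exact: (esym (commrX a (commr_refl M))).
Qed.

Definition PL L : MP := \prod_(a <- L) qf (M ^+ a).
Definition ev (cs : seq (R * seq nat)) : MP := \sum_(c <- cs) c.1 *: PL c.2.

Lemma ev_cat s1 s2 : ev (s1 ++ s2) = ev s1 + ev s2.
Proof. by rewrite /ev big_cat. Qed.

Lemma gd_PL a L : gd (qf (M ^+ a)) (PL L) = ev (pr R a L).
Proof.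
elim: L => [|b L IH]; first by rewrite /PL /ev big_nil /gd /= big_nil big1 // => i _; rewrite mderivC mulr0.
rewrite /PL big_cons /= -/(PL L) gdM IH gd_qf ?trmxXs // /ev big_cons big_map /=.
rewrite -[M ^+ a *m _]/(M ^+ a * M ^+ b) -exprD /PL big_cons -/(PL L) -scalerAl.
congr (_ + _); rewrite mulr_sumr; apply: eq_bigr => c _; rewrite big_cons -scalerAr //.
Qed.

Definition Tr a := \tr (M ^+ a).

Lemma lap_PL L : lap (PL L) = ev (Dl Tr L).
Proof.
elim: L => [|a L IH]; first by rewrite /PL big_nil /ev big_nil /lap big1 // => i _; rewrite mderivC mderiv0.
rewrite /PL big_cons -/(PL L) lapM IH gd_PL lap_qf /= ev_cat /ev big_cons big_map /=.
rewrite -!/(ev _) -addrA; congr (_ + _).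
  rewrite /ev big_map mulr_sumr; apply: eq_bigr => c _ /=.
  by rewrite /PL big_cons -scalerAr.
rewrite mulrC -scalerAl mul1r; congr (_ + _).
by rewrite /ev -sumrMnl; apply: eq_bigr => c _ /=; rewrite scalerMnl.
Qed.

Lemma iter_lapD n p q : iter n (@lap R d) (p + q) = iter n (@lap R d) p + iter n (@lap R d) q.
Proof. by elim: n => //= n ->; rewrite lapD. Qed.
Lemma iter_lapZ n c p : iter n (@lap R d) (c *: p) = c *: iter n (@lap R d) p.
Proof. by elim: n => //= n ->; rewrite lapZ. Qed.
Lemma iter_lap0 n : iter n (@lap R d) 0 = 0.
Proof. by elim: n => //= n ->; rewrite lap0. Qed.

Lemma iter_lap_PL n L : size L = n -> iter n (@lap R d) (PL L) = Kf n Tr L *: 1.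
Proof.
elim: n L => [|n IH] [|a L] //; first by rewrite /= /PL big_nil scale1r.
move=> [eL]; rewrite iterSr lap_PL /ev.
change (Kf n.+1 Tr (a::L)) with (\sum_(c <- Dl Tr (a::L)) c.1 * Kf n Tr c.2).
rewrite (big_morph _ (iter_lapD n) (iter_lap0 n)) scaler_suml big_seq [RHS]big_seq.
apply: eq_bigr => c cin; rewrite iter_lapZ IH ?scalerA //.
by apply/eqP; rewrite -eqSS (Dl_size cin) /= eL.
Qed.

End PL.

Section Trig.
Variables (F : comNzRingType) (n : nat).

Lemma trig_mul (A B : 'M[F]_n) : is_trig_mx A -> is_trig_mx B ->
  is_trig_mx (A *m B) /\ forall i, (A *m B) i i = A i i * B i i.
Proof.
move=> /is_trig_mxP hA /is_trig_mxP hB; split.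
  apply/is_trig_mxP => i j lt_ij; rewrite mxE big1 // => k _.
  case: (ltnP i k) => [lt_ik|le_ki]; first by rewrite hA // mul0r.
  by rewrite hB ?mulr0 // (leq_ltn_trans le_ki lt_ij).
move=> i; rewrite mxE (bigD1 i) //= big1 ?addr0 // => k nki.
case: (ltngtP i k) => [lt_ik|lt_ki|e].
- by rewrite hA // mul0r.
- by rewrite hB // mulr0.
- by move: nki; rewrite (val_inj e) eqxx.
Qed.

Lemma trig_exp (A : 'M[F]_n) a : is_trig_mx A ->
  is_trig_mx (A ^+ a) /\ forall i, (A ^+ a) i i = A i i ^+ a.
Proof.
move=> hA; elim: a => [|a [h1 h2]].
  by rewrite expr0; split; [exact: scalar_mx_is_trig | move=> i; rewrite mxE eqxx].
rewrite exprSr; have [h3 h4] := trig_mul h1 hA; split => // i.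
by rewrite -[_ * _]/(_ *m _) h4 h2 exprSr.
Qed.

End Trig.

Section CharConj.
Variables (F : fieldType) (n : nat).

Lemma char_poly_conj (P A : 'M[F]_n) : P \in unitmx ->
  char_poly (P *m A *m invmx P) = char_poly A.
Proof.
move=> Pu; rewrite /char_poly /char_poly_mx.
set Pp := map_mx polyC P; set Ip := map_mx polyC (invmx P).
have PI : Pp *m Ip = 1%:M by rewrite -map_mxM mulmxV // map_mx1.
have IP : Ip *m Pp = 1%:M by rewrite -map_mxM mulVmx // map_mx1.
have -> : 'X%:M - map_mx polyC (P *m A *m invmx P) = Pp *m ('X%:M - map_mx polyC A) *m Ip.
  by rewrite !map_mxM mulmxBr mulmxBl scalar_mxC -(mulmxA _ Pp) PI mulmx1.
rewrite !det_mulmx mulrC mulrA -det_mulmx IP det1 mul1r //.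
Qed.

End CharConj.

Lemma conj_exp (F : fieldType) n (P A : 'M[F]_n) a : P \in unitmx ->
  (P *m A *m invmx P) ^+ a = P *m A ^+ a *m invmx P.
Proof.
move=> Pu; elim: a => [|a IH]; first by rewrite !expr0 mulmx1 mulmxV.
rewrite exprSr IH -[_ * _]/(_ *m _) !mulmxA mulmxKV //.
by rewrite exprSr -[A ^+ a * A]/(_ *m _) !mulmxA.
Qed.

Lemma tr_pow_closed (C : numClosedFieldType) n (A : 'M[C]_n) (t : 'I_n -> C) :
  char_poly A = \prod_i ('X - (t i)%:P) -> forall a, \tr (A ^+ a) = \sum_i t i ^+ a.
Proof.
case: n A t => [|n] A t h a; first by rewrite /mxtrace !big_ord0.
have [P Pun Ptrig] := Schur A (ltn0Sn n).
have Pu := unitarymx_unit Pun.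
move: Ptrig; rewrite /similar_to conjumx // => Ptrig.
set T := P *m A *m invmx P in Ptrig.
have cT : char_poly T = \prod_i ('X - (T i i)%:P) by rewrite char_poly_trig.
rewrite /T char_poly_conj // h in cT.
have pe : perm_eq [seq t i | i <- enum 'I_n.+1] [seq T i i | i <- enum 'I_n.+1].
  by apply: prod_XsubC_eq; rewrite !big_map; exact: cT.
have -> : \tr (A ^+ a) = \tr (T ^+ a).
  by rewrite /T conj_exp // mxtrace_mulC mulKmx.
have [_ h2] := trig_exp a Ptrig.
rewrite /mxtrace (eq_bigr _ (fun i _ => h2 i)).
have e (f : 'I_n.+1 -> C) : \sum_i f i ^+ a = \sum_(x <- [seq f i | i <- enum 'I_n.+1]) x ^+ a.
  by rewrite big_map enumT.
by rewrite !e (perm_big _ pe).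
Qed.


Lemma map_mxX (K K' : comNzRingType) (f : {rmorphism K -> K'}) n (A : 'M[K]_n) a :
  map_mx f (A ^+ a) = (map_mx f A) ^+ a.
Proof.
elim: a => [|a IH]; first by rewrite !expr0 map_mx1.
by rewrite !exprS -[_ * _]/(_ *m _) map_mxM IH.
Qed.

Lemma tr_pow_real (R : rcfType) n (M : 'M[R]_n) (s : 'I_n -> R) :
  char_poly M = \prod_i ('X - (s i)%:P) -> forall a, \tr (M ^+ a) = \sum_i s i ^+ a.
Proof.
move=> h a; pose f := real_complex R.
apply: (@complexI R).
have := @tr_pow_closed _ n (map_mx f M) (fun i => f (s i)).
rewrite -map_char_poly h rmorph_prod /=.
under eq_bigr => i _ do rewrite map_polyXsubC.
move=> /(_ erefl a); rewrite -map_mxX trace_map_mx => ->.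
by rewrite rmorph_sum; apply: eq_bigr => i _; rewrite rmorphXn.
Qed.

Lemma msymXU (R : nzRingType) n (s : {perm 'I_n}) (i : 'I_n) :
  msym s ('X_i : {mpoly R[n]}) = 'X_(s i).
Proof.
rewrite msymX; congr ('X_[_]); apply/mnmP => j.
rewrite mnmE /= !mnm1E; congr (nat_of_bool _); apply/eqP/eqP => [->|<-]; by rewrite ?permKV ?permK.
Qed.

Lemma psum_sym (R : comNzRingType) n a :
  (\sum_(i < n) 'X_i ^+ a : {mpoly R[n]}) \is symmetric.
Proof.
apply/issymP => s; rewrite raddf_sum /=.
under eq_bigr => i _ do rewrite rmorphXn /= msymXU.
by rewrite [RHS](reindex_inj (@perm_inj _ s)).
Qed.

Lemma psum_homog (R : comNzRingType) n k :
  (\sum_(i < n) 'X_i ^+ k : {mpoly R[n]}) \is k.-homog.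
Proof.
apply: (big_ind (fun x : {mpoly R[n]} => x \is k.-homog)); [exact: dhomog0|exact: dhomogD|].
move=> i _; have h : ('X_i : {mpoly R[n]}) \is 1.-homog by rewrite dhomogX /= mdeg1.
by have := dhomogMn k h; rewrite mul1n.
Qed.

Section Main.
Variables (R : rcfType) (d : nat).
Local Notation MP := {mpoly R[d]}.

Lemma peval_qf (N : 'M[R]_d) (x : 'cV[R]_d) : peval (qf N) x = (x^T *m N *m x) 0 0.
Proof.
rewrite /peval /qf rmorph_sum mxE /=; under eq_bigr => i _ do rewrite rmorph_sum /=.
rewrite exchange_big /=; apply: eq_bigr => j _; rewrite mxE mulr_suml.
by apply: eq_bigr => i _; rewrite mevalZ mevalM !mevalXU !mxE; ring.
Qed.

Lemma peval_sqnorm (x : 'cV[R]_d) : peval (sqnorm_poly R d) x = sqnorm x.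
Proof.
rewrite /peval /sqnorm_poly /sqnorm rmorph_sum; apply: eq_bigr => i _.
by rewrite rmorphXn /= mevalXU.
Qed.

Lemma sqnorm_qf : sqnorm_poly R d = qf 1%:M.
Proof.
rewrite /sqnorm_poly /qf; apply: eq_bigr => i _.
rewrite (bigD1 i) //= big1 ?addr0; first by rewrite mxE eqxx scale1r expr2.
by move=> j /negbTE nij; rewrite mxE eq_sym nij scale0r.
Qed.

Lemma tr11 (A : 'M[R]_1) : \tr A = A 0 0.
Proof. by rewrite /mxtrace big_ord1. Qed.

Lemma hs_inner_P (M : 'M[R]_d) (z : 'cV[R]_d) : M^T = M ->
  hs_inner M (Pproj z) = (z^T *m M *m z) 0 0.
Proof.
move=> hM; rewrite /hs_inner /Pproj hM mulmxA mxtrace_mulC tr11 mulmxA //.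
Qed.

Lemma hs_norm_P (y : 'cV[R]_d) : hs_norm (Pproj y) = sqnorm y.
Proof.
have e : (y^T *m y) 0 0 = sqnorm y.
  by rewrite mxE /sqnorm; apply: eq_bigr => i _; rewrite mxE expr2.
rewrite /hs_norm /hs_inner /Pproj trmx_mul trmxK.
rewrite -mulmxA mxtrace_mulC !mulmxA -(mulmxA _ y) tr11.
rewrite !mulmxA -(mulmxA _ y^T y).
have -> : (y^T *m y *m (y^T *m y)) 0 0 = ((y^T *m y) 0 0) ^+ 2.
  by rewrite [LHS]mxE big_ord1 expr2.
rewrite e sqrtr_sqr ger0_norm // /sqnorm sumr_ge0 // => i _; exact: sqr_ge0.
Qed.

Lemma G_reindex (G : seq 'M[R]_d) V (g : 'M[R]_d -> R) :
  finite_subgroup_O G -> V \in G ->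
  \sum_(U <- G) g (U *m V) = \sum_(U <- G) g U.
Proof.
case=> uG G1 GM GV GO VG.
have Vu : V \in unitmx by case: (mulmx1_unit (GO V VG)).
rewrite -(big_map (fun U => U *m V) xpredT g); apply: perm_big.
apply: uniq_perm.
- by rewrite map_inj_uniq // => A B /(congr1 (mulmx^~ (invmx V))); rewrite !mulmxK.
- exact: uG.
move=> W; apply/mapP/idP => [[U UG ->]|WG]; first exact: GM.
exists (W *m invmx V); first by apply: GM => //; exact: GV.
by rewrite mulmxKV.
Qed.

Lemma tr_conj (U M : 'M[R]_d) a : U *m U^T = 1%:M ->
  \tr ((U^T *m M *m U) ^+ a) = \tr (M ^+ a).
Proof.
move=> hU; have e : (U^T *m M *m U) ^+ a = U^T *m M ^+ a *m U.
  elim: a => [|a IH]; first by rewrite !expr0 mulmx1 mulmx1C.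
  rewrite exprSr IH -[_ * _]/(_ *m _) !mulmxA -(mulmxA _ U) hU mulmx1.
  by rewrite exprSr -[M ^+ a * M]/(M ^+ a *m M) !mulmxA.
by rewrite e mxtrace_mulC mulmxA hU mul1mx.
Qed.

Lemma PL_ones (N : 'M[R]_d) p : PL N (nseq p 1%N) = qf N ^+ p.
Proof.
rewrite /PL big_nseq expr1; elim: p => [|p IH] /=; first by rewrite expr0.
by rewrite IH exprS.
Qed.

Lemma main_pos (G : seq 'M[R]_d) (p : nat) :
  (0 < d)%N ->
  finite_subgroup_O G -> (1 <= p)%N ->
  (forall q : {mpoly R[d]}, q \is (2 * p)%N.-homog ->
     (forall U x, U \in G -> peval q (U *m x) = peval q x) ->
     exists c : R, q = c *: sqnorm_poly R d ^+ p) ->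
  exists F : {mpoly R[d]},
    [/\ F \is p.-homog, F \is symmetric &
      forall (M : 'M[R]_d) (s : 'I_d -> R) (y : 'cV[R]_d),
        M^T = M -> eigen_multiset M s ->
        (size G)%:R^-1 * \sum_(U <- G) hs_inner M (Pproj (U *m y)) ^+ p
          = F.@[s] * hs_norm (Pproj y) ^+ p
        /\ F.@[s] * hs_norm (Pproj y) ^+ p = F.@[s] * sqnorm y ^+ p].
Proof.
move=> hd HG hp Hinv.
have [uG G1 GM GV GO] := HG.
set ones := nseq p 1%N.
set k0 := Kf p (fun _ => d%:R : R) ones.
have k0_gt0 : 0 < k0 by apply: Kf_pos; [move=> _; rewrite ltr0n | rewrite size_nseq].
pose Tp (a : nat) : MP := \sum_(i < d) 'X_i ^+ a.
exists (k0^-1 *: Kf p Tp ones); split.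
- apply: dhomogZ; have := Kf_homog p ones (@psum_homog R d).
  by rewrite /ones sumn_nseq mul1n.
- by apply: rpredZ; apply: Kf_sym => a; apply: psum_sym.
move=> M s y hM hs.
rewrite hs_norm_P; split => //.
have sG : size G != 0%N by apply: contraTneq G1 => /size0nil ->.
pose q : MP := (size G)%:R^-1 *: \sum_(U <- G) qf (U^T *m M *m U) ^+ p.
have peq x : peval q x = (size G)%:R^-1 * \sum_(U <- G) peval (qf (U^T *m M *m U)) x ^+ p.
  rewrite /peval /q mevalZ rmorph_sum; congr (_ * _); apply: eq_bigr => U _.
  by rewrite rmorphXn.
have qhom : q \is (2 * p)%N.-homog.
  apply: dhomogZ; rewrite big_seq.
  apply: (big_ind (fun x : MP => x \is (2 * p)%N.-homog)); [exact: dhomog0|exact: dhomogD|].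
  move=> U _; apply: dhomogMn; rewrite /qf.
  apply: (big_ind (fun x : MP => x \is 2.-homog)); [exact: dhomog0|exact: dhomogD|] => i _.
  apply: (big_ind (fun x : MP => x \is 2.-homog)); [exact: dhomog0|exact: dhomogD|] => j _.
  apply: dhomogZ; have hX (k : 'I_d) : ('X_k : MP) \is 1.-homog by rewrite dhomogX /= mdeg1.
  exact: (dhomogM (hX i) (hX j)).
have qinv U x : U \in G -> peval q (U *m x) = peval q x.
  move=> UG; rewrite !peq; congr (_ * _).
  rewrite -(G_reindex (fun W => peval (qf (W^T *m M *m W)) x ^+ p) HG UG).
  apply: eq_bigr => W _; rewrite !peval_qf; congr (_ ^+ _).
  by rewrite !trmx_mul !mulmxA.
have [c qc] := Hinv q qhom qinv.
have lhs : (size G)%:R^-1 * \sum_(U <- G) hs_inner M (Pproj (U *m y)) ^+ p = c * sqnorm y ^+ p.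
  have := peq y; rewrite qc /peval mevalZ rmorphXn /= -/(peval _ y) peval_sqnorm => ->.
  congr (_ * _); apply: eq_bigr => U _; rewrite hs_inner_P //.
  transitivity (peval (qf (U^T *m M *m U)) y ^+ p); last by [].
  by rewrite peval_qf !trmx_mul !mulmxA.
rewrite lhs; congr (_ * _).
have symN U : U \in G -> (U^T *m M *m U)^T = U^T *m M *m U.
  by move=> _; rewrite !trmx_mul trmxK hM mulmxA.
have LapN U : U \in G -> iter p (@lap R d) (qf (U^T *m M *m U) ^+ p) = Kf p (Tr M) ones *: 1.
  move=> UG; rewrite -PL_ones iter_lap_PL ?size_nseq ?symN //.
  by congr (_ *: _); apply: eq_Kf => a; rewrite /Tr tr_conj ?GO.
have Lapq : iter p (@lap R d) q = Kf p (Tr M) ones *: 1.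
  rewrite /q iter_lapZ (big_morph _ (@iter_lapD R d p) (@iter_lap0 R d p)) big_seq.
  rewrite (eq_bigr _ (fun U UG => LapN U UG)) -big_seq big_const_seq count_predT.
  by rewrite iter_addr addr0 -scaler_nat scalerA mulVf ?pnatr_eq0 // scale1r.
have LapI : iter p (@lap R d) (sqnorm_poly R d ^+ p) = k0 *: 1.
  rewrite sqnorm_qf -PL_ones iter_lap_PL ?size_nseq ?trmx1 //.
  by congr (_ *: _); apply: eq_Kf => a; rewrite /Tr expr1n mxtrace1.
have : Kf p (Tr M) ones = c * k0.
  have := congr1 (iter p (@lap R d)) qc; rewrite Lapq iter_lapZ LapI scalerA.
  move=> /(congr1 (meval (fun _ => 0 : R))); rewrite !mevalZ meval1 !mulr1 //.
move=> ck; rewrite mevalZ rmorph_Kf.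
have -> : Kf p (meval s \o Tp) ones = Kf p (Tr M) ones.
  apply: eq_Kf => a /=; rewrite /Tr (tr_pow_real hs) rmorph_sum.
  by apply: eq_bigr => i _; rewrite rmorphXn /= mevalXU.
by rewrite ck mulrC mulfK // gt_eqF.
Qed.

End Main.

Theorem theorem3p2 (R : rcfType) (d : nat) (G : seq 'M[R]_d) (p : nat) :
  finite_subgroup_O G -> (1 <= p)%N ->
  (forall q : {mpoly R[d]}, q \is (2 * p)%N.-homog ->
     (forall U x, U \in G -> peval q (U *m x) = peval q x) ->
     exists c : R, q = c *: sqnorm_poly R d ^+ p) ->
  exists F : {mpoly R[d]},
    [/\ F \is p.-homog, F \is symmetric &
      forall (M : 'M[R]_d) (s : 'I_d -> R) (y : 'cV[R]_d),
        M^T = M -> eigen_multiset M s ->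
        (size G)%:R^-1 * \sum_(U <- G) hs_inner M (Pproj (U *m y)) ^+ p
          = F.@[s] * hs_norm (Pproj y) ^+ p
        /\ F.@[s] * hs_norm (Pproj y) ^+ p = F.@[s] * sqnorm y ^+ p].
Proof.
move=> HG hp Hinv; case: (posnP d) => [d0|dpos]; last exact: main_pos.
subst d; exists 0; split; [exact: dhomog0 | exact: rpred0 |].
move=> M s y _ _; rewrite meval0 !mul0r; split => //.
rewrite big1 ?mulr0 // => U _.
by rewrite /hs_inner /mxtrace big_ord0 expr0n eqn0Ngt hp.
Qed.
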